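(* Suppose that $m,n\in\mathbb N$ and that $R\in\{1,\ldots,2m-1\}$ is odd. Let $(X,\|\cdot\|_X)$ be a Banach space and $p\in[1,\infty)$. Then for every $f:\mathbb Z_{4m}^n\to X$ and every $S\subset\{1,\ldots,n\}$, $$\sum_{x\in\mathbb Z_{4m}^n}\|f(x)-D_Sf(x)\|_X^p\lesssim_p\frac{R^p}{2^n}\sum_{\varepsilon\in\{-1,1\}^n}\sum_{x\in\mathbb Z_{4m}^n}\|f(x+\varepsilon)-f(x)\|_X^p+\frac1{2^n}\sum_{\varepsilon\in\{-1,1\}^n}\sum_{x\in\mathbb Z_{4m}^n}\|f(x+\varepsilon_S)-f(x)\|_X^p.$$
   Context: $\mathbb Z_{4m}^n=(\mathbb Z/4m\mathbb Z)^n$, integer vectors added modulo $4m$. $\varepsilon_S=\sum_{j\in S}\varepsilon_je_j$. For $S\subset\{1,\ldots,n\}$ and odd $R\le 2m-1$, let $U_S\subset\mathbb Z_{4m}^n$ be the image (under reduction mod $4m$, which is injective on $[-R,R]^n$) of the set of integer vectors $y\in[-R,R]^n\cap\mathbb Z^n$ such that $y_i$ is even for every $i\in S$ and $y_j$ is odd for every $j\notin S$ (so $|U_S|=R^{|S|}(R+1)^{n-|S|}$). The averaging operator $D_S$ is $D_Sf(x)=\frac1{|U_S|}\sum_{y\in U_S}f(x+y)$. Notation: $a\lesssim_p b$ means $a\le c^pb$ for a universal constant $c$. *)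

(* Defs.v *)
From HB Require Import structures.
From mathcomp Require Import all_boot all_order all_algebra.
From Stdlib Require Import Reals.

Set Implicit Arguments.
Unset Strict Implicit.
Unset Printing Implicit Defensive.

Record Banach := {
  bcar :> Type;
  vadd : bcar -> bcar -> bcar;
  vopp : bcar -> bcar;
  vzero : bcar;
  vscal : R -> bcar -> bcar;
  vnorm : bcar -> R;
  vaddA : forall x y z, vadd x (vadd y z) = vadd (vadd x y) z;
  vaddC : forall x y, vadd x y = vadd y x;
  vadd0 : forall x, vadd x vzero = x;
  vaddN : forall x, vadd x (vopp x) = vzero;
  vscal1 : forall x, vscal 1%R x = x;
  vscalA : forall a b x, vscal a (vscal b x) = vscal (a * b)%R x;
  vscalDr : forall a x y, vscal a (vadd x y) = vadd (vscal a x) (vscal a y);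
  vscalDl : forall a b x, vscal (a + b)%R x = vadd (vscal a x) (vscal b x);
  vnorm_eq0 : forall x, vnorm x = 0%R -> x = vzero;
  vnorm_scal : forall a x, vnorm (vscal a x) = (Rabs a * vnorm x)%R;
  vnorm_tri : forall x y, (vnorm (vadd x y) <= vnorm x + vnorm y)%R;
  vcomplete : forall u : nat -> bcar,
    (forall eps, (0 < eps)%R -> exists N, forall i j, (N <= i)%coq_nat -> (N <= j)%coq_nat ->
        (vnorm (vadd (u i) (vopp (u j))) < eps)%R) ->
    exists l, forall eps, (0 < eps)%R -> exists N, forall i, (N <= i)%coq_nat ->
        (vnorm (vadd (u i) (vopp l)) < eps)%R
}.

Definition vsub (X : Banach) (x y : X) : X := vadd x (vopp y).

(* t^p for t >= 0 and real p >= 1 (with 0^p = 0; Stdlib's Rpower 0 p = 1). *)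
Definition powp (t p : R) : R := if Rle_dec t 0 then 0%R else Rpower t p.

Notation "\rsum_ ( x : T ) F" := (\big[Rplus/0%R]_(x : T) F)
  (at level 41, F at level 41, x, T at level 50).

Local Open Scope ring_scope.
Definition vec (m n : nat) := {ffun 'I_n -> 'Z_(4 * m)}.

Definition vplus m n (x y : vec m n) : vec m n := [ffun i => x i + y i].

Definition sgnvec m n (e : {ffun 'I_n -> bool}) : vec m n :=
  [ffun i => if e i then 1 else -1].

Definition sgnvecS m n (S : {set 'I_n}) (e : {ffun 'I_n -> bool}) : vec m n :=
  [ffun i => if i \in S then (if e i then 1 else -1) else 0].

Definition intvec n r (k : {ffun 'I_n -> 'I_(r.*2.+1)}) (i : 'I_n) : int :=
  (k i)%:Z - r%:Z.

(* U_S : image mod 4m of integer vectors y in [-r,r]^n with y_i even for i in S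
   and y_j odd for j not in S *)
Definition U_S m n r (S : {set 'I_n}) : {set vec m n} :=
  [set [ffun i => ((intvec k i)%:~R : 'Z_(4 * m))] |
     k : {ffun 'I_n -> 'I_(r.*2.+1)} &
     [forall i, (intvec k i \in dvdz 2) == (i \in S)]].

Local Close Scope ring_scope.
Definition D_S m n r (S : {set 'I_n}) (X : Banach) (f : vec m n -> X) (x : vec m n) : X :=
  vscal (/ INR #|U_S m r S|)%R
    (\big[@vadd X/vzero X]_(y in U_S m r S) f (vplus x y)).

(* Main.v *)
Require Import Defs.
From HB Require Import structures.
From mathcomp Require Import all_boot all_order all_algebra.
From Stdlib Require Import Reals Lra.
From mathcomp Require Import zify.

Set Implicit Arguments.
Unset Strict Implicit.
Unset Printing Implicit Defensive.
Import GRing.Theory.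

Lemma Rplus_assoc' : associative Rplus.
Proof. by move=> x y z; rewrite Rplus_assoc. Qed.
HB.instance Definition _ := Monoid.isComLaw.Build R 0%R Rplus Rplus_assoc' Rplus_comm Rplus_0_l.

Open Scope R_scope.

Lemma rsum_le (I : Type) (r : seq I) (P : pred I) (F G : I -> R) :
  (forall i, P i -> F i <= G i) ->
  \big[Rplus/0]_(i <- r | P i) F i <= \big[Rplus/0]_(i <- r | P i) G i.
Proof.
move=> H; apply: (big_ind2 (fun a b => a <= b)) => //; first lra.
move=> *; lra.
Qed.

Lemma rsum_ge0 (I : Type) (r : seq I) (P : pred I) (F : I -> R) :
  (forall i, P i -> 0 <= F i) -> 0 <= \big[Rplus/0]_(i <- r | P i) F i.
Proof.
move=> H; apply: (big_ind (fun a => 0 <= a)) => //; first lra.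
move=> *; lra.
Qed.

Lemma rsum_mull (I : Type) (r : seq I) (P : pred I) (F : I -> R) c :
  c * \big[Rplus/0]_(i <- r | P i) F i = \big[Rplus/0]_(i <- r | P i) (c * F i).
Proof.
apply: (big_endo (fun x => c * x)); last by rewrite Rmult_0_r.
by move=> x y; rewrite Rmult_plus_distr_l.
Qed.

Lemma rsum_split (I : Type) (r : seq I) (P : pred I) (F G : I -> R) :
  \big[Rplus/0]_(i <- r | P i) (F i + G i) =
  \big[Rplus/0]_(i <- r | P i) F i + \big[Rplus/0]_(i <- r | P i) G i.
Proof. by rewrite big_split. Qed.

Lemma rsum_const (I : finType) (A : {pred I}) c :
  \big[Rplus/0]_(i in A) c = INR #|A| * c.
Proof.
rewrite big_const; elim: #|A| => [|k IH]; first by rewrite /= Rmult_0_l.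
rewrite iterS IH S_INR; lra.
Qed.

Lemma powp_ge0 t p : 0 <= powp t p.
Proof.
rewrite /powp; case: (Rle_dec t 0) => h /=; first lra.
rewrite /Rpower; left; apply: exp_pos.
Qed.

Lemma powp_pos t p : 0 < t -> powp t p = Rpower t p.
Proof. by rewrite /powp; case: Rle_dec => /= // ?; lra. Qed.

Lemma powp0 p : powp 0 p = 0.
Proof. by rewrite /powp; case: Rle_dec => /= //; lra. Qed.

Lemma powp_le a b p : 0 <= p -> 0 <= a <= b -> powp a p <= powp b p.
Proof.
move=> hp [ha hab].
case: (Req_dec a 0) => [->|a0]; first by rewrite powp0; apply: powp_ge0.
rewrite !powp_pos; try lra.
apply: Rle_Rpower_l; lra.
Qed.

Lemma powp_mul a b p : 0 <= a -> 0 <= b -> powp (a * b) p = powp a p * powp b p.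
Proof.
move=> ha hb.
case: (Req_dec a 0) => [->|a0]; first by rewrite Rmult_0_l powp0 Rmult_0_l.
case: (Req_dec b 0) => [->|b0]; first by rewrite Rmult_0_r powp0 Rmult_0_r.
rewrite !powp_pos; try lra; last by apply: Rmult_lt_0_compat; lra.
by rewrite Rpower_mult_distr //; lra.
Qed.

Lemma Rpower_ge1 c q : 1 <= c -> 0 <= q -> 1 <= Rpower c q.
Proof.
move=> hc hq; rewrite /Rpower.
have : 0 <= q * ln c.
  apply: Rmult_le_pos => //.
  case: (Req_dec c 1) => [->|c1]; first by rewrite ln_1; lra.
  left; rewrite -ln_1; apply: ln_increasing; lra.
move=> h; have := exp_ineq1_le (q * ln c); lra.
Qed.

Lemma Rpower_le1 c q : 0 < c <= 1 -> 0 <= q -> Rpower c q <= 1.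
Proof.
move=> hc hq; rewrite /Rpower.
have : q * ln c <= 0.
  rewrite -(Rmult_0_r q); apply: Rmult_le_compat_l => //.
  case: (Req_dec c 1) => [->|c1]; first by rewrite ln_1; lra.
  left; rewrite -ln_1; apply: ln_increasing; lra.
move=> h; rewrite -exp_0.
case: h => h; [left; exact: exp_increasing | by rewrite h; lra].
Qed.

Lemma Rpower_1p p : Rpower 1 p = 1.
Proof. by rewrite /Rpower ln_1 Rmult_0_r exp_0. Qed.

Lemma bernoulli u p : 1 <= p -> 0 <= u -> 1 + p * (u - 1) <= powp u p.
Proof.
move=> hp hu.
case: (Req_dec u 0) => [->|u0]; first by rewrite powp0; lra.
rewrite powp_pos; last lra.
have der : forall c, 0 < c -> derivable_pt_lim (fun x => Rpower x p) c (p * Rpower c (p - 1)).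
  by move=> c hc; apply: derivable_pt_lim_power.
case: (Rtotal_order u 1) => [ult|[->|ugt]].
- have [c [hc hcb]] := MVT_cor2 (fun x => Rpower x p) (fun c => p * Rpower c (p - 1)) u 1 ult
    (fun c hc => der c ltac:(lra)).
  simpl in hc; rewrite Rpower_1p in hc.
  have := Rpower_le1 (c:=c) (q:=p-1) ltac:(lra) ltac:(lra).
  move=> h1.
  have h2 : p * Rpower c (p - 1) * (1 - u) <= p * (1 - u).
    apply: Rmult_le_compat_r; first lra.
    have : p * Rpower c (p - 1) <= p * 1 by apply: Rmult_le_compat_l; lra.
    lra.
  lra.
- rewrite Rpower_1p; lra.
- have [c [hc hcb]] := MVT_cor2 (fun x => Rpower x p) (fun c => p * Rpower c (p - 1)) 1 u ugt
    (fun c hc => der c ltac:(lra)).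
  simpl in hc; rewrite Rpower_1p in hc.
  have := Rpower_ge1 (c:=c) (q:=p-1) ltac:(lra) ltac:(lra).
  move=> h1.
  have h2 : p * (u - 1) <= p * Rpower c (p - 1) * (u - 1).
    apply: Rmult_le_compat_r; first lra.
    have : p * 1 <= p * Rpower c (p - 1) by apply: Rmult_le_compat_l; lra.
    lra.
  lra.
Qed.

Lemma jensen (I : finType) (P : pred I) (w t : I -> R) p : 1 <= p ->
  (forall i, P i -> 0 <= w i) -> (forall i, P i -> 0 <= t i) ->
  \big[Rplus/0]_(i | P i) w i = 1 ->
  powp (\big[Rplus/0]_(i | P i) (w i * t i)) p <=
  \big[Rplus/0]_(i | P i) (w i * powp (t i) p).
Proof.
move=> hp hw ht hw1.
set s := \big[Rplus/0]_(i | P i) (w i * t i).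
have s0 : 0 <= s by apply: rsum_ge0 => i Pi; apply: Rmult_le_pos; auto.
case: (Req_dec s 0) => [->|sn0].
  by rewrite powp0; apply: rsum_ge0 => i Pi; apply: Rmult_le_pos; auto; apply: powp_ge0.
have sp : 0 < s by lra.
have key : forall i, P i -> w i * (powp s p * (1 + p * (t i / s - 1))) <= w i * powp (t i) p.
  move=> i Pi; apply: Rmult_le_compat_l; first by auto.
  have hts : 0 <= t i / s.
    apply: Rmult_le_pos; first by auto.
    by left; apply: Rinv_0_lt_compat.
  have e : powp (t i) p = powp s p * powp (t i / s) p.
    rewrite -powp_mul; [|lra|done]. congr powp; field; lra.
  rewrite e; apply: Rmult_le_compat_l; first by apply: powp_ge0.
  by apply: bernoulli.
apply: (Rle_trans _ _ _ _ (@rsum_le I (index_enum I) P _ _ key)).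
have -> : \big[Rplus/0]_(i | P i) (w i * (powp s p * (1 + p * (t i / s - 1)))) =
   \big[Rplus/0]_(i | P i) (powp s p * (1 - p) * w i + (powp s p * p / s) * (w i * t i)).
  apply: eq_bigr => i _; field; lra.
rewrite rsum_split -!rsum_mull hw1 -/s.
have -> : powp s p * p / s * s = powp s p * p by field; lra.
lra.
Qed.

Lemma rsum_constP (I : finType) (P : pred I) c :
  \big[Rplus/0]_(i | P i) c = INR #|P| * c.
Proof. exact: (rsum_const P). Qed.

Lemma jensenN (I : finType) (P : pred I) (t : I -> R) p : 1 <= p ->
  (forall i, P i -> 0 <= t i) ->
  powp (\big[Rplus/0]_(i | P i) t i) p <=
  Rpower (INR #|P|) (p - 1) * \big[Rplus/0]_(i | P i) powp (t i) p.
Proof.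
move=> hp ht.
case: (posnP #|P|) => [P0|Ppos].
  rewrite big_pred0; last by move=> i; have := card0_eq P0 i; rewrite !inE.
  rewrite powp0; apply: Rmult_le_pos; first by rewrite /Rpower; left; apply: exp_pos.
  by apply: rsum_ge0 => i _; apply: powp_ge0.
have N0 : 0 < INR #|P| by apply: lt_0_INR; apply/ltP.
set N := INR #|P|.
have N0' : 0 < N by exact: N0.
have e1 : \big[Rplus/0]_(i | P i) t i = N * \big[Rplus/0]_(i | P i) (/ N * t i).
  rewrite rsum_mull; apply: eq_bigr => i _; rewrite /N; field; lra.
rewrite e1 powp_mul; [|lra|]; last first.
  apply: rsum_ge0 => i Pi; apply: Rmult_le_pos; [left; apply: Rinv_0_lt_compat; exact: N0'| auto].
have J := @jensen I P (fun _ => / N) t p hp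
  (fun i _ => ltac:(left; apply: Rinv_0_lt_compat; exact: N0')) ht
  ltac:(rewrite rsum_constP -/N; field; apply: Rgt_not_eq; exact: N0').
rewrite powp_pos //.
have -> : Rpower N (p - 1) = Rpower N p * / N.
  have : Rpower N (p - 1) * Rpower N 1 = Rpower N p by rewrite -Rpower_plus; congr Rpower; lra.
  rewrite Rpower_1 //; move=> <-; field; lra.
rewrite Rmult_assoc rsum_mull; apply: Rmult_le_compat_l; first by left; apply: exp_pos.
exact: J.
Qed.
Section Ban.
Variable X : Banach.
Implicit Types x y z : X.
Local Notation "a +v b" := (vadd a b) (at level 50, left associativity).

Lemma vadd0l x : vzero X +v x = x.
Proof. by rewrite vaddC vadd0. Qed.

Lemma vaddNl x : vopp x +v x = vzero X.
Proof. by rewrite vaddC vaddN. Qed.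

Lemma vaddIr z x y : x +v z = y +v z -> x = y.
Proof.
move=> h; have := f_equal (fun u => u +v vopp z) h.
by rewrite -!vaddA !vaddN !vadd0.
Qed.

Lemma vscal0 x : vscal 0 x = vzero X.
Proof.
apply: (@vaddIr (vscal 0 x)); rewrite vadd0l -vscalDl.
by rewrite Rplus_0_l.
Qed.

Lemma voppE x : vopp x = vscal (-1) x.
Proof.
apply: (@vaddIr x); rewrite vaddNl.
rewrite -{2}(vscal1 x) -vscalDl; have -> : (-1 + 1 = 0)%R by lra.
by rewrite vscal0.
Qed.

Lemma vscal_zero a : vscal a (vzero X) = vzero X.
Proof. by rewrite -(vscal0 (vzero X)) vscalA Rmult_0_r. Qed.

Lemma vnorm0 : vnorm (vzero X) = 0%R.
Proof. by rewrite -(vscal0 (vzero X)) vnorm_scal Rabs_R0 Rmult_0_l. Qed.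

Lemma vnorm_opp x : vnorm (vopp x) = vnorm x.
Proof. by rewrite voppE vnorm_scal Rabs_Ropp Rabs_R1 Rmult_1_l. Qed.

Lemma vnorm_ge0 x : (0 <= vnorm x)%R.
Proof.
have := vnorm_tri x (vopp x); rewrite vaddN vnorm0 vnorm_opp; lra.
Qed.

Lemma voppD x y : vopp (x +v y) = vopp x +v vopp y.
Proof. by rewrite !voppE vscalDr. Qed.

Lemma vsubDD (a b c d : X) : vsub (a +v b) (c +v d) = vsub a c +v vsub b d.
Proof.
rewrite /vsub voppD -!vaddA; congr vadd.
by rewrite !vaddA (vaddC b).
Qed.

Lemma vsub_sym (a b : X) : vnorm (vsub a b) = vnorm (vsub b a).
Proof.
rewrite -vnorm_opp /vsub voppD !voppE vscalA.
have -> : (-1 * -1 = 1)%R by lra.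
by rewrite vscal1 vaddC.
Qed.

Lemma vsub_tri (a b c : X) : (vnorm (vsub a c) <= vnorm (vsub a b) + vnorm (vsub b c))%R.
Proof.
have -> : vsub a c = vsub a b +v vsub b c.
  by rewrite /vsub -vaddA (vaddA (vopp b)) vaddNl vadd0l.
exact: vnorm_tri.
Qed.

Lemma vsub_scal c (a b : X) : vsub (vscal c a) (vscal c b) = vscal c (vsub a b).
Proof.
by rewrite /vsub vscalDr !voppE !vscalA Rmult_comm.
Qed.

Lemma vsum_const (I : finType) (A : {pred I}) (v : X) :
  \big[@vadd X/vzero X]_(i in A) v = vscal (INR #|A|) v.
Proof.
rewrite big_const; elim: #|A| => [|k IH]; first by rewrite /= vscal0.
by rewrite iterS IH S_INR vscalDl vscal1 vaddC.
Qed.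

Lemma vsum_sub_le (I : finType) (A : {pred I}) (F G : I -> X) :
  (vnorm (vsub (\big[@vadd X/vzero X]_(i in A) F i) (\big[@vadd X/vzero X]_(i in A) G i))
   <= \big[Rplus/0]_(i in A) vnorm (vsub (F i) (G i)))%R.
Proof.
apply: (big_ind3 (fun a b c => vnorm (vsub a b) <= c)%R).
- by rewrite /vsub vaddN vnorm0; lra.
- move=> x1 x2 x3 y1 y2 y3 h1 h2; rewrite vsubDD.
  have := vnorm_tri (vsub x1 x2) (vsub y1 y2); lra.
- by move=> i _; lra.
Qed.

Lemma avg_bound (I : finType) (A : {pred I}) (g : I -> X) (v : X) :
  is_true (0 < #|A|)%nat ->
  (vnorm (vsub v (vscal (/ INR #|A|) (\big[@vadd X/vzero X]_(i in A) g i)))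
   <= / INR #|A| * \big[Rplus/0]_(i in A) vnorm (vsub (g i) v))%R.
Proof.
move=> hA; have N0 : (0 < INR #|A|)%R by apply: lt_0_INR; apply/ltP.
have hv : v = vscal (/ INR #|A|) (\big[@vadd X/vzero X]_(i in A) v).
  rewrite vsum_const vscalA Rinv_l ?vscal1 //; lra.
rewrite {1}hv vsub_scal vnorm_scal Rabs_right; last by left; apply: Rinv_0_lt_compat.
apply: Rmult_le_compat_l; first by left; apply: Rinv_0_lt_compat.
apply: Rle_trans (vsum_sub_le _ _ _) _.
by right; apply: eq_bigr => i _; rewrite vsub_sym.
Qed.
End Ban.

Section Vec.
Local Open Scope ring_scope.

Lemma vplusE m n (x y : vec m n) : vplus x y = x + y.
Proof. by apply/ffunP => i; rewrite !ffunE. Qed.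

Definition phi m n (s : {ffun 'I_n -> bool}) (y : vec m n) : vec m n :=
  [ffun i => if s i then y i else - y i].

Definition msg n (s e : {ffun 'I_n -> bool}) : {ffun 'I_n -> bool} :=
  [ffun i => s i == e i].

Lemma phiK m n s : involutive (@phi m n s).
Proof. by move=> y; apply/ffunP => i; rewrite !ffunE; case: (s i) => //; rewrite opprK. Qed.

Lemma msgK n e : involutive (fun s => @msg n s e).
Proof. by move=> s; apply/ffunP => i; rewrite !ffunE; case: (s i); case: (e i). Qed.

Lemma rsum_shift m n (F : vec m n -> R) z :
  \big[Rplus/0%R]_(x : vec m n) F (vplus x z) = \big[Rplus/0%R]_(x : vec m n) F x.
Proof.
rewrite [RHS](reindex_inj (h := fun x => vplus x z)) //.
by move=> x y; rewrite !vplusE; apply: addIr.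
Qed.

Lemma rsum_msg n (F : {ffun 'I_n -> bool} -> R) e :
  \big[Rplus/0%R]_(s : {ffun 'I_n -> bool}) F (msg s e) = \big[Rplus/0%R]_(s : {ffun 'I_n -> bool}) F s.
Proof.
rewrite [RHS](reindex_inj (h := fun s => msg s e)) //.
exact: can_inj (msgK e).
Qed.

Lemma intvec_par n r (k : {ffun 'I_n -> 'I_r.*2.+1}) i :
  odd r -> (intvec k i \in dvdz 2) = odd (k i).
Proof.
move=> hr; rewrite /intvec -eqz_mod_dvd !modz_nat !modn2 hr.
by case: (odd (k i)).
Qed.

Lemma phi_U m n r (S : {set 'I_n}) s y : odd r ->
  y \in U_S m r S -> phi s y \in U_S m r S.
Proof.
move=> hr /imsetP [k]; rewrite inE => /forallP Pk ->.
pose k' : {ffun 'I_n -> 'I_r.*2.+1} := [ffun i => if s i then k i else rev_ord (k i)].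
have hk' : forall i, intvec k' i = if s i then intvec k i else - intvec k i.
  move=> i; rewrite /intvec ffunE; case: (s i) => //=.
  rewrite /=; move: (ltn_ord (k i)); move: (nat_of_ord (k i)) => a.
  rewrite ltnS => la.
  rewrite subSS; lia.
apply/imsetP; exists k'.
  rewrite inE; apply/forallP => i; rewrite hk'.
  by have := Pk i; case: (s i) => //; rewrite [in X in X -> _]dvdzE [in X in _ == _ -> X]dvdzE abszN.
apply/ffunP => i; rewrite !ffunE hk'; case: (s i) => //.
by rewrite intrN.
Qed.

Lemma rsum_U_phi m n r (S : {set 'I_n}) s (G : vec m n -> R) : odd r ->
  \big[Rplus/0%R]_(y in U_S m r S) G (phi s y) = \big[Rplus/0%R]_(y in U_S m r S) G y.
Proof.
move=> hr.
rewrite -(big_imset (h := phi s) G); last by move=> x y _ _; exact: (can_inj (@phiK m n s)).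
have -> : [set phi s x | x in U_S m r S] = U_S m r S; last by [].
apply/setP => z; apply/imsetP/idP.
- by case=> x xU ->; apply: phi_U.
- by move=> zU; exists (phi s z); [apply: phi_U | rewrite phiK].
Qed.

Lemma sum_sgn (T : pzRingType) r a :
  \sum_(j < r) (if (j < a)%nat then 1 else -1 : T) = (minn a r)%:R - (r - a)%:R.
Proof.
elim: r => [|r IH]; first by rewrite big_ord0 minn0 sub0n subrr.
rewrite big_ord_recr /= IH.
case: (ltnP r a) => h.
- have e1 : minn a r.+1 = r.+1 by lia.
  have e2 : minn a r = r by lia.
  have e3 : (r.+1 - a = 0)%nat by lia.
  have e4 : (r - a = 0)%nat by lia.
  by rewrite e1 e3 e4 !subr0 mulrS addrC.
- have e1 : minn a r.+1 = a by lia.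
  have e2 : minn a r = a by lia.
  have e3 : (r.+1 - a = (r - a).+1)%nat by lia.
  by rewrite e1 e3 mulrS opprD addrA addrAC.
Qed.

Lemma natzR (T : pzRingType) (k : nat) : ((k%:Z)%:~R : T) = k%:R.
Proof. by []. Qed.

Lemma decomp m n r (S : {set 'I_n}) (y : vec m n) : odd r ->
  y \in U_S m r S -> exists eps : 'I_r -> {ffun 'I_n -> bool},
  forall s, phi s y = \sum_(j < r) sgnvec m (msg s (eps j)) + sgnvecS m S (msg s [ffun _ => true]).
Proof.
move=> hr /imsetP [k]; rewrite inE => /forallP Pk ->.
exists (fun j : 'I_r => [ffun i => (j < (k i)./2)%nat]) => s.
apply/ffunP => i; rewrite !ffunE sum_ffunE.
under eq_bigr => j _ do rewrite !ffunE.
have par : odd (k i) = (i \in S) by have := Pk i; rewrite intvec_par // => /eqP.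
have hy : ((intvec k i)%:~R : 'Z_(4 * m)) =
   \sum_(j < r) (if (j < (k i)./2)%nat then 1 else -1) + (if i \in S then 1 else 0).
  rewrite sum_sgn -par.
  have la : ((k i)./2 <= r)%nat.
    have := ltn_ord (k i); rewrite ltnS => h.
    by apply: leq_trans (half_leq h) _; rewrite doubleK.
  have -> : minn (k i)./2 r = (k i)./2 by apply/minn_idPl.
  have hk := odd_double_half (k i).
  have -> : intvec k i = ((k i)./2)%:Z - (r - (k i)./2)%nat%:Z + (odd (k i))%:Z.
    rewrite /intvec; move: hk la; case: (odd (k i)) => /=; lia.
  rewrite intrD intrB !natzR.
  by case: (odd (k i)).
rewrite hy; case: (s i) => /=.
- congr (_ + _); apply: eq_bigr => j _; by rewrite eq_sym eqb_id.
- rewrite opprD -sumrN; congr (_ + _).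
    by apply: eq_bigr => j _; case: ifP => _ /=; rewrite ?opprK.
  by case: (i \in S); rewrite ?oppr0.
Qed.

Lemma telesc (X : Banach) (g : nat -> X) N :
  (vnorm (vsub (g N) (g 0%nat)) <= \big[Rplus/0%R]_(j < N) vnorm (vsub (g j.+1) (g j)))%R.
Proof.
elim: N => [|N IH].
  by rewrite big_ord0 /vsub vaddN vnorm0; apply: Rle_refl.
rewrite big_ord_recr /=.
apply: Rle_trans (vsub_tri _ (g N) _) _.
rewrite Rplus_comm; apply: Rplus_le_compat_r; exact: IH.
Qed.

Definition pref m n r (z : 'I_r -> vec m n) (j : nat) : vec m n :=
  \sum_(i < r | (i < j)%nat) z i.

Lemma pref0 m n r z : @pref m n r z 0 = 0.
Proof. by rewrite /pref big_pred0. Qed.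

Lemma prefr m n r z : @pref m n r z r = \sum_(i < r) z i.
Proof. by apply: eq_bigl => i; rewrite ltn_ord. Qed.

Lemma prefS m n r z (j : 'I_r) : @pref m n r z j.+1 = pref z j + z j.
Proof.
rewrite /pref (bigD1 j) //= addrC; congr (_ + _).
apply: eq_bigl => i; rewrite ltnS leq_eqVlt.
case: (ltngtP i j) => //= h.
  by apply/eqP => hh; move: h; rewrite hh ltnn.
by apply/negbTE; rewrite negbK; apply/eqP; apply: val_inj.
Qed.

Lemma jensen2 a b p : (1 <= p)%R -> (0 <= a)%R -> (0 <= b)%R ->
  (powp (a + b) p <= Rpower 2 (p - 1) * (powp a p + powp b p))%R.
Proof.
move=> hp ha hb.
have ht : forall c : bool, xpredT c -> (0 <= (if c then a else b))%R by case.
have := @jensenN bool xpredT (fun c => if c then a else b) p hp ht.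
rewrite !big_bool card_bool /=.
by have -> : (2 = 1 + 1)%R by lra.
Qed.

Lemma jensen_ord r (t : 'I_r -> R) p : (1 <= p)%R -> (forall j, 0 <= t j)%R ->
  (powp (\big[Rplus/0%R]_(j < r) t j) p <=
   Rpower (INR r) (p - 1) * \big[Rplus/0%R]_(j < r) powp (t j) p)%R.
Proof.
move=> hp ht.
have := @jensenN 'I_r xpredT t p hp (fun j _ => ht j).
by rewrite cardT /= size_enum_ord.
Qed.

Definition Gf m n (X : Banach) (f : vec m n -> X) p (z : vec m n) : R :=
  \big[Rplus/0%R]_(x : vec m n) powp (vnorm (vsub (f (vplus x z)) (f x))) p.

Lemma Gf_ge0 m n X f p z : (0 <= @Gf m n X f p z)%R.
Proof. by apply: rsum_ge0 => x _; apply: powp_ge0. Qed.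

Lemma path_bound m n r (X : Banach) (f : vec m n -> X) p (z : 'I_r -> vec m n) (w : vec m n) :
  (1 <= p)%R ->
  Rle (Gf f p (\sum_(j < r) z j + w)) (Rpower 2 (p - 1) *
     (Rpower (INR r) (p - 1) * \big[Rplus/0%R]_(j < r) Gf f p (z j) + Gf f p w))%R.
Proof.
move=> hp.
set Z := \sum_(j < r) z j.
pose a x := vnorm (vsub (f (vplus x (Z + w))) (f (vplus x Z))).
pose b (j : 'I_r) x := vnorm (vsub (f (vplus x (pref z j.+1))) (f (vplus x (pref z j)))).
have pw : forall x, Rle (powp (vnorm (vsub (f (vplus x (Z + w))) (f x))) p)
    (Rpower 2 (p - 1) * (powp (a x) p + Rpower (INR r) (p - 1) * \big[Rplus/0%R]_(j < r) powp (b j x) p))%R.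
  move=> x.
  have n1 : Rle (vnorm (vsub (f (vplus x (Z + w))) (f x))) (a x + \big[Rplus/0%R]_(j < r) b j x)%R.
    apply: Rle_trans (vsub_tri _ (f (vplus x Z)) _) _.
    apply: Rplus_le_compat_l.
    have := telesc (fun k => f (vplus x (pref z k))) r.
    rewrite prefr pref0 -/Z.
    have -> : vplus x 0 = x by rewrite vplusE addr0.
    done.
  have bs0 : (0 <= \big[Rplus/0%R]_(j < r) b j x)%R.
    by apply: rsum_ge0 => j _; apply: vnorm_ge0.
  apply: Rle_trans (powp_le (p:=p) _ (conj (vnorm_ge0 _) n1)) _; first lra.
  apply: Rle_trans (jensen2 hp (vnorm_ge0 _) bs0) _.
  apply: Rmult_le_compat_l; first by left; apply: exp_pos.
  apply: Rplus_le_compat_l; apply: jensen_ord => // j; apply: vnorm_ge0.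
apply: Rle_trans (@rsum_le _ (index_enum _) xpredT _ _ (fun x _ => pw x)) _.
have ea : \big[Rplus/0%R]_x powp (a x) p = Gf f p w.
  rewrite /Gf -(rsum_shift (fun y => powp (vnorm (vsub (f (vplus y w)) (f y))) p) Z).
  by apply: eq_bigr => x _; rewrite /a !vplusE addrA.
have eb : \big[Rplus/0%R]_x \big[Rplus/0%R]_(j < r) powp (b j x) p =
    \big[Rplus/0%R]_(j < r) Gf f p (z j).
  rewrite exchange_big; apply: eq_bigr => j _.
  rewrite /Gf -(rsum_shift (fun y => powp (vnorm (vsub (f (vplus y (z j))) (f y))) p) (pref z j)).
  by apply: eq_bigr => x _; rewrite /b prefS !vplusE addrA.
rewrite -rsum_mull; apply: Rmult_le_compat_l; first by left; apply: exp_pos.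
rewrite rsum_split -rsum_mull ea eb; lra.
Qed.

Lemma INR_expn2 n : INR (expn 2 n) = pow 2 n.
Proof. elim: n => [|n IH]; first by []. rewrite expnS mult_INR IH //. Qed.

Lemma cardF n : #|{ffun 'I_n -> bool}| = expn 2 n.
Proof. by rewrite card_ffun card_bool card_ord. Qed.

Lemma U_nonempty m n r (S : {set 'I_n}) : odd r -> (1 <= r)%nat -> (0 < #|U_S m r S|)%nat.
Proof.
move=> hr r1.
pose k : {ffun 'I_n -> 'I_r.*2.+1} := [ffun i => inord (if i \in S then r else r.+1)].
apply/card_gt0P; exists [ffun i => ((intvec k i)%:~R : 'Z_(4 * m))].
apply/imsetP; exists k => //; rewrite inE; apply/forallP => i.
rewrite intvec_par // /k ffunE inordK; last by case: (i \in S); lia.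
by case: (i \in S) => /=; rewrite ?hr ?negbK.
Qed.

Lemma stepB m n r (S : {set 'I_n}) (X : Banach) (f : vec m n -> X) p y :
  odd r -> (1 <= r)%nat -> (1 <= p)%R -> y \in U_S m r S ->
  Rle (\big[Rplus/0%R]_(s : {ffun 'I_n -> bool}) Gf f p (phi s y))
   (Rpower 2 (p - 1) * (Rpower (INR r) p *
        \big[Rplus/0%R]_(e : {ffun 'I_n -> bool}) Gf f p (sgnvec m e)
      + \big[Rplus/0%R]_(e : {ffun 'I_n -> bool}) Gf f p (sgnvecS m S e)))%R.
Proof.
move=> hr r1 hp yU.
have [eps Heps] := decomp hr yU.
have pb : forall s : {ffun 'I_n -> bool}, xpredT s -> Rle (Gf f p (phi s y))
   (Rpower 2 (p - 1) * (Rpower (INR r) (p - 1) *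
      \big[Rplus/0%R]_(j < r) Gf f p (sgnvec m (msg s (eps j)))
      + Gf f p (sgnvecS m S (msg s [ffun=> true]))))%R.
  move=> s _; rewrite Heps.
  exact: (path_bound f (fun j => sgnvec m (msg s (eps j))) (sgnvecS m S (msg s [ffun=> true])) hp).
apply: Rle_trans (@rsum_le _ (index_enum _) xpredT _ _ pb) _.
rewrite -rsum_mull; apply: Rmult_le_compat_l; first by left; apply: exp_pos.
rewrite rsum_split -rsum_mull exchange_big /=.
have e1 : forall j : 'I_r, \big[Rplus/0%R]_(s : {ffun 'I_n -> bool}) Gf f p (sgnvec m (msg s (eps j)))
     = \big[Rplus/0%R]_(e : {ffun 'I_n -> bool}) Gf f p (sgnvec m e).
  by move=> j; rewrite (rsum_msg (fun s => Gf f p (sgnvec m s))).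
rewrite (eq_bigr _ (fun j _ => e1 j)) (rsum_msg (fun s => Gf f p (sgnvecS m S s))).
rewrite (rsum_constP xpredT) cardT /= size_enum_ord.
have -> : (Rpower (INR r) (p - 1) * (INR r * \big[Rplus/0%R]_(e : {ffun 'I_n -> bool}) Gf f p (sgnvec m e)) =
   Rpower (INR r) p * \big[Rplus/0%R]_(e : {ffun 'I_n -> bool}) Gf f p (sgnvec m e))%R.
  have rp : (0 < INR r)%R by apply: lt_0_INR; apply/ltP.
  rewrite -Rmult_assoc; congr (_ * _)%R.
  rewrite -{2}(Rpower_1 (INR r)) // -Rpower_plus; congr Rpower; lra.
exact: Rle_refl.
Qed.
End Vec.

Lemma main_bound (m n r : nat) (X : Banach) (p : R) (f : vec m n -> X) (S : {set 'I_n}) :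
  odd r -> (1 <= r)%nat -> (1 <= p)%R ->
  ((\rsum_(x : vec m n) powp (vnorm (vsub (f x) (D_S r S f x))) p)
   <= Rpower 2 (p - 1) *
        ((Rpower (INR r) p / pow 2 n) *
           (\rsum_(e : {ffun 'I_n -> bool}) Gf f p (sgnvec m e))
         + (/ pow 2 n) *
           (\rsum_(e : {ffun 'I_n -> bool}) Gf f p (sgnvecS m S e))))%R.
Proof.
move=> hr r1 hp.
set U := U_S m r S.
have U0 : (0 < #|U|)%nat by apply: U_nonempty.
have N0 : (0 < INR #|U|)%R by apply: lt_0_INR; apply/ltP.
set SA := \rsum_(e : {ffun 'I_n -> bool}) Gf f p (sgnvec m e).
set SB := \rsum_(e : {ffun 'I_n -> bool}) Gf f p (sgnvecS m S e).
have stepA : ((\rsum_(x : vec m n) powp (vnorm (vsub (f x) (D_S r S f x))) p)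
   <= / INR #|U| * \big[Rplus/0%R]_(y in U) Gf f p y)%R.
  apply: Rle_trans (_ : (_ <= \big[Rplus/0%R]_(x : vec m n) \big[Rplus/0%R]_(y in U)
       (/ INR #|U| * powp (vnorm (vsub (f (vplus x y)) (f x))) p))%R) _.
    apply: rsum_le => x _.
    apply: Rle_trans (_ : (_ <= powp (\big[Rplus/0%R]_(y in U)
         (/ INR #|U| * vnorm (vsub (f (vplus x y)) (f x)))) p)%R) _.
      apply: powp_le; first lra.
      split; first by apply: vnorm_ge0.
      rewrite -rsum_mull; exact: (avg_bound (A := U) (fun y => f (vplus x y)) (f x) U0).
    apply: (@jensen _ (fun y => y \in U)) => //.
    - by move=> y _; left; apply: Rinv_0_lt_compat.
    - by move=> y _; apply: vnorm_ge0.
    - by rewrite (rsum_const U); field; lra.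
  right; rewrite exchange_big rsum_mull; apply: eq_bigr => y _.
  by rewrite /Gf rsum_mull.
have stepC : (INR (expn 2 n) * \big[Rplus/0%R]_(y in U) Gf f p y =
    \big[Rplus/0%R]_(y in U) \big[Rplus/0%R]_(s : {ffun 'I_n -> bool}) Gf f p (phi s y))%R.
  rewrite -cardF -(rsum_constP xpredT) [RHS]exchange_big /=.
  apply: eq_bigr => s _.
  by rewrite (rsum_U_phi S s (fun y => Gf f p y) hr).
set K := (Rpower 2 (p - 1) * (Rpower (INR r) p * SA + SB))%R.
have stepD : (\big[Rplus/0%R]_(y in U) \big[Rplus/0%R]_(s : {ffun 'I_n -> bool}) Gf f p (phi s y)
    <= INR #|U| * K)%R.
  rewrite -(rsum_const U); apply: rsum_le => y yU.
  exact: stepB.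
have P2 : (0 < pow 2 n)%R by apply: pow_lt; lra.
apply: Rle_trans stepA _.
have -> : (\big[Rplus/0%R]_(y in U) Gf f p y =
   / pow 2 n * \big[Rplus/0%R]_(y in U) \big[Rplus/0%R]_(s : {ffun 'I_n -> bool}) Gf f p (phi s y))%R.
  rewrite -stepC INR_expn2; field; lra.
apply: Rle_trans (_ : (_ <= / INR #|U| * (/ pow 2 n * (INR #|U| * K)))%R) _.
  apply: Rmult_le_compat_l; first by left; apply: Rinv_0_lt_compat.
  apply: Rmult_le_compat_l; first by left; apply: Rinv_0_lt_compat.
  exact: stepD.
right; rewrite /K; field; split; lra.
Qed.

Delimit Scope nat_scope with N.

Theorem mainTheorem8 :
  exists c : R, (0 < c)%R /\
  forall (m n r : nat), odd r -> (1 <= r)%N -> (r <= 2 * m - 1)%N ->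
  forall (X : Banach) (p : R), (1 <= p)%R ->
  forall (f : vec m n -> X) (S : {set 'I_n}),
    ((\rsum_(x : vec m n) powp (vnorm (vsub (f x) (D_S r S f x))) p)
     <= Rpower c p *
        ((Rpower (INR r) p / pow 2 n) *
           (\rsum_(e : {ffun 'I_n -> bool}) (\rsum_(x : vec m n)
              powp (vnorm (vsub (f (vplus x (sgnvec m e))) (f x))) p))
         + (/ pow 2 n) *
           (\rsum_(e : {ffun 'I_n -> bool}) (\rsum_(x : vec m n)
              powp (vnorm (vsub (f (vplus x (sgnvecS m S e))) (f x))) p))))%R.
Proof.
exists 2%R; split; first lra.
move=> m n r hr r1 _ X p hp f S.
apply: Rle_trans (main_bound f S hr r1 hp) _.
apply: Rmult_le_compat_r.
  have P2 : (0 < pow 2 n)%R by apply: pow_lt; lra.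
  have hA : (0 <= \rsum_(e : {ffun 'I_n -> bool}) Gf f p (sgnvec m e))%R
    by apply: rsum_ge0 => e _; apply: Gf_ge0.
  have hB : (0 <= \rsum_(e : {ffun 'I_n -> bool}) Gf f p (sgnvecS m S e))%R
    by apply: rsum_ge0 => e _; apply: Gf_ge0.
  have hR : (0 < Rpower (INR r) p)%R by apply: exp_pos.
  have hI : (0 < / pow 2 n)%R by apply: Rinv_0_lt_compat.
  apply: Rplus_le_le_0_compat; apply: Rmult_le_pos; try lra.
  rewrite /Rdiv; apply: Rmult_le_pos; lra.
apply: Rle_Rpower; lra.
Qed.
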